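(* Let $K\ge1$, $r\in[0,1]^K$, $g(\theta)=\pi_\theta^\top r$ with $\pi_\theta=\mathrm{softmax}(\theta)$, $\theta\in\mathbb{R}^K$. Let $\theta\in\mathbb{R}^K$ with $\nabla g(\theta)\neq0$, let $\eta\in(0,1/3)$, and let $\theta'=\theta+\eta\,\nabla g(\theta)/\|\nabla g(\theta)\|_2$. Then for every $\zeta\in[0,1]$, with $\theta_\zeta:=\theta+\zeta(\theta'-\theta)$, $$\|\nabla g(\theta_\zeta)\|_2\le\frac{1}{1-3\eta}\,\|\nabla g(\theta)\|_2.$$
   Context: $\mathrm{softmax}(\theta)(a)=e^{\theta(a)}/\sum_{a'}e^{\theta(a')}$. *)

(* Defs.v *)
From HB Require Import structures.
From mathcomp Require Import all_boot all_order all_algebra.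
From mathcomp Require Import all_classical all_reals all_analysis.
Set Implicit Arguments. Unset Strict Implicit. Unset Printing Implicit Defensive.
Import Order.TTheory GRing.Theory Num.Theory.
Import numFieldNormedType.Exports.
Local Open Scope ring_scope.

Section Defs.
Variables (R : realType) (K : nat).

Definition softmax (th : 'rV[R]_K) : 'rV[R]_K :=
  \row_a (expR (th 0 a) / \sum_b expR (th 0 b)).

Definition gval (r : 'rV[R]_K) (th : 'rV[R]_K) : R :=
  \sum_a softmax th 0 a * r 0 a.

Definition grad (f : 'rV[R]_K -> R) (th : 'rV[R]_K) : 'rV[R]_K :=
  \row_a ('D_(delta_mx 0 a) f th).

Definition norm2 (v : 'rV[R]_K) : R := Num.sqrt (\sum_a v 0 a ^+ 2).

End Defs.

(* Main.v *)
Require Import Defs.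
From HB Require Import structures.
From mathcomp Require Import all_boot all_order all_algebra.
From mathcomp Require Import all_classical all_reals all_analysis.
From mathcomp Require Import ring lra.
Import Order.TTheory GRing.Theory Num.Theory.
Import numFieldNormedType.Exports.
Local Open Scope ring_scope.

Section CSsec.
Variables (R : realType) (K : nat).

Lemma CS (a b : 'I_K -> R) :
  (\sum_i a i * b i)^+2 <= (\sum_i a i ^+2) * (\sum_i b i ^+2).
Proof.
have E1 : (\sum_i a i * b i)^+2 = \sum_i \sum_j (a i * b j) * (a j * b i).
  rewrite expr2 mulr_suml; apply: eq_bigr => i _; rewrite mulr_sumr.
  by apply: eq_bigr => j _; ring.
have E2 : (\sum_i a i ^+2) * (\sum_i b i ^+2) = \sum_i \sum_j (a i * b j)^+2.
  rewrite mulr_suml; apply: eq_bigr => i _; rewrite mulr_sumr.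
  by apply: eq_bigr => j _; ring.
have E3 : \sum_i \sum_j (a i * b j)^+2 = \sum_i \sum_j (a j * b i)^+2.
  by rewrite exchange_big.
have E4 : \sum_i \sum_j (2 * ((a i * b j) * (a j * b i))) = 
   2 * \sum_i \sum_j (a i * b j) * (a j * b i).
  rewrite mulr_sumr; apply: eq_bigr => i _; by rewrite mulr_sumr.
have H : \sum_i \sum_j (2 * ((a i * b j) * (a j * b i))) <=
   \sum_i \sum_j (a i * b j)^+2 + \sum_i \sum_j (a j * b i)^+2.
  rewrite -big_split /=.
  apply: ler_sum => i _; rewrite -big_split /=.
  apply: ler_sum => j _.
  have := sqr_ge0 (a i * b j - a j * b i); nra.
rewrite E1 E2; lra.
Qed.
End CSsec.


Section Alg.
Variables (R : realType) (K : nat).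

Lemma term_le_sum (F : 'I_K -> R) a : (forall b, 0 <= F b) -> F a <= \sum_b F b.
Proof.
move=> F0; rewrite (bigD1 a) //= lerDl; exact: sumr_ge0.
Qed.

Lemma key (p w r : 'I_K -> R) (eta : R) : (forall b, 0 <= p b) -> \sum_b p b = 1 ->
  0 <= eta -> \sum_b w b ^+2 <= eta^+2 -> forall g wb Dg,
  g = \sum_b p b * r b -> wb = \sum_b p b * w b ->
  Dg = \sum_a p a * (w a - wb) * r a ->
  \sum_a (2 * (p a * (r a - g))) * (p a * (w a - wb) * (r a - g) + p a * - Dg)
   <= 6 * eta * \sum_a (p a * (r a - g)) ^+2.
Proof.
move=> p0 p1 eta0 weta g wb Dg Eg Ewb EDg.
set h := fun a => p a * (r a - g).
set G := \sum_a h a ^+ 2.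
have G0 : 0 <= G by apply: sumr_ge0 => a _; exact: sqr_ge0.
have wle a : - eta <= w a <= eta.
  have : w a ^+2 <= eta ^+2.
    apply: le_trans weta; apply: (term_le_sum (fun b => w b ^+ 2)) => b; exact: sqr_ge0.
  move=> H; apply/andP; split; nra.
have ple a : p a <= 1 by rewrite -p1; exact: term_le_sum.
have wbu : wb <= eta.
  rewrite Ewb -[eta]mul1r -p1 mulr_suml; apply: ler_sum => b _.
  by apply: ler_wpM2l => //; case/andP: (wle b).
have wbl : - eta <= wb.
  rewrite Ewb -[- eta]mul1r -p1 mulr_suml; apply: ler_sum => b _.
  by apply: ler_wpM2l => //; case/andP: (wle b).
have DgE : Dg = \sum_a w a * h a.
  have E1 : Dg = \sum_a p a * w a * r a - wb * g.
    rewrite EDg Eg mulr_sumr -sumrB; apply: eq_bigr => a _; ring.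
  have E2 : \sum_a w a * h a = \sum_a p a * w a * r a - g * wb.
    rewrite /h Ewb mulr_sumr -sumrB; apply: eq_bigr => a _; ring.
  by rewrite E1 E2 mulrC.
set Y := \sum_a h a * p a.
have LHSE : \sum_a (2 * h a) * (p a * (w a - wb) * (r a - g) + p a * - Dg) =
    2 * \sum_a h a ^+ 2 * (w a - wb) - 2 * (Dg * Y).
  rewrite /Y !mulr_sumr -sumrB; apply: eq_bigr => a _; rewrite /h; ring.
rewrite LHSE.
have T1 : \sum_a h a ^+ 2 * (w a - wb) <= 2 * eta * G.
  rewrite /G mulr_sumr; apply: ler_sum => a _.
  have := sqr_ge0 (h a); case/andP: (wle a) => ? ?; nra.
have CS1 : Dg ^+ 2 <= eta ^+2 * G.
  rewrite DgE; apply: le_trans (@CS _ _ w h) _; apply: ler_wpM2r => //.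
have Sp2 : \sum_a p a ^+ 2 <= 1.
  rewrite -p1; apply: ler_sum => a _; have := p0 a; have := ple a; nra.
have CS2 : Y ^+ 2 <= G.
  apply: le_trans (@CS _ _ h p) _; rewrite -[X in _ <= X]mulr1; apply: ler_wpM2l => //.
have T2 : - (Dg * Y) <= eta * G.
  have H : (Dg * Y) ^+ 2 <= (eta * G) ^+ 2.
    rewrite !exprMn; apply: le_trans (ler_pM (sqr_ge0 _) (sqr_ge0 _) CS1 CS2) _.
    by rewrite -mulrA -expr2.
  have eG : 0 <= eta * G by apply: mulr_ge0.
  move: H eG; generalize (Dg * Y) (eta * G) => z q H eG.
  case: (leP (- z) q) => // hlt; exfalso; nra.
move: T1 T2; clearbody G Y; generalize (\sum_a h a ^+ 2 * (w a - wb)) (Dg * Y) => A B; lra.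
Qed.
End Alg.


Section D.
Variables (R : realType) (K : nat).

Lemma dlin (c d t : R) : is_derive t 1 (fun s : R => c + s * d) d.
Proof.
have -> : (fun s : R => c + s * d) = cst c + (fun s => d *: s).
  by apply/funext => s /=; rewrite /GRing.scale /= mulrC.
by apply: is_derive_eq; rewrite add0r /GRing.scale /= mulr1.
Qed.

Lemma dexp (c d t : R) :
  is_derive t 1 (fun s : R => expR (c + s * d)) (expR (c + t * d) * d).
Proof.
have -> : (fun s : R => expR (c + s * d)) = expR \o (fun s : R => c + s * d) by [].
apply: is_derive1_comp; last exact: dlin.
Qed.

Variables (th v : 'rV[R]_K).
Definition Ex a (s : R) := expR (th 0 a + s * v 0 a).
Definition Sx (s : R) := \sum_b Ex b s.

Lemma Ex_gt0 a s : 0 < Ex a s. Proof. exact: expR_gt0. Qed.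

Lemma Sx_gt0 (a : 'I_K) s : 0 < Sx s.
Proof.
rewrite /Sx (bigD1 a) //=; apply: ltr_pwDl; first exact: Ex_gt0.
by apply: sumr_ge0 => b _; exact/ltW/Ex_gt0.
Qed.

Lemma dSx (t : R) : is_derive t 1 Sx (\sum_b Ex b t * v 0 b).
Proof.
have -> : Sx = \sum_b Ex b by rewrite /Sx fct_sumE.
apply: is_derive_sum => b; exact: dexp.
Qed.

Lemma softmax_line a s : softmax (th + s *: v) 0 a = Ex a s / Sx s.
Proof.
rewrite /softmax mxE /Sx /Ex !mxE; congr (expR _ / _).
by apply: eq_bigr => b _; rewrite !mxE /GRing.scale /= mulrC.
Qed.

Definition Pf a s := Ex a s / Sx s.
Definition wbar s := \sum_b Pf b s * v 0 b.

Lemma dP a (t : R) : is_derive t 1 (Pf a) (Pf a t * (v 0 a - wbar t)).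
Proof.
have -> : Pf a = Ex a * (fun s => (Sx s)^-1) by apply/funext.
have Sn0 : Sx t != 0 by rewrite gt_eqF // (Sx_gt0 a).
apply: (is_derive_eq (is_deriveM (dexp _ _ t) (is_deriveV Sn0 (dSx t)))).
rewrite /wbar /Pf.
have -> : \sum_b Ex b t / Sx t * v 0 b = (Sx t)^-1 * \sum_b Ex b t * v 0 b.
  by rewrite mulr_sumr; apply: eq_bigr => b _; ring.
rewrite (_ : (Ex a * _) t = Ex a t / Sx t) //.
rewrite /GRing.scale /= /Ex; field.
exact: Sn0.
Qed.

Lemma gval_line (r : 'rV[R]_K) s : gval r (th + s *: v) = \sum_a Pf a s * r 0 a.
Proof. by apply: eq_bigr => a _; rewrite softmax_line. Qed.

Lemma dg (r : 'rV[R]_K) (t : R) : is_derive t 1 (fun s => gval r (th + s *: v))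
   (\sum_a Pf a t * (v 0 a - wbar t) * r 0 a).
Proof.
have -> : (fun s => gval r (th + s *: v)) = \sum_a (fun s => Pf a s * r 0 a).
  by rewrite fct_sumE; apply/funext => s; rewrite gval_line.
apply: is_derive_sum => a.
have -> : (fun s => Pf a s * r 0 a) = Pf a * cst (r 0 a) by apply/funext.
apply: (is_derive_eq (is_deriveM (dP a t) (is_derive_cst _ _ _))).
by rewrite scaler0 add0r /GRing.scale /= mulrC.
Qed.

Variable (r : 'rV[R]_K).
Definition gs s := \sum_b Pf b s * r 0 b.
Definition cc a s := r 0 a - gs s.
Definition hh a s := Pf a s * cc a s.
Definition Gf s := \sum_a hh a s ^+ 2.
Definition Dgv t := \sum_a Pf a t * (v 0 a - wbar t) * r 0 a.
Definition dGf t := \sum_a (2 * hh a t) *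
   (Pf a t * (v 0 a - wbar t) * cc a t + Pf a t * - Dgv t).

Lemma dgs (t : R) : is_derive t 1 gs (Dgv t).
Proof.
have -> : gs = (fun s => gval r (th + s *: v)).
  by apply/funext => s; rewrite gval_line.
exact: dg.
Qed.

Lemma dhh a (t : R) : is_derive t 1 (hh a)
   (Pf a t * (v 0 a - wbar t) * cc a t + Pf a t * - Dgv t).
Proof.
have -> : hh a = Pf a * (cst (r 0 a) - gs) by apply/funext.
apply: (is_derive_eq (is_deriveM (dP a t) (is_deriveB (is_derive_cst _ _ _) (dgs t)))).
rewrite /GRing.scale /= /cc.
rewrite (_ : (cst (r 0 a) - gs) t = r 0 a - gs t) //; ring.
Qed.

Lemma dG (t : R) : is_derive t 1 Gf (dGf t).
Proof.
have -> : Gf = \sum_a (hh a ^+ 2) by rewrite fct_sumE; apply/funext => s; rewrite /Gf.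
apply: is_derive_sum => a.
apply: (is_derive_eq (is_deriveX 2 (dhh a t))).
rewrite /GRing.scale /=; ring.
Qed.
Lemma Pf_ge0 a s : 0 <= Pf a s.
Proof. by rewrite /Pf divr_ge0 // ltW // ?Ex_gt0 // (Sx_gt0 a). Qed.

Lemma Pf_sum1 (a0 : 'I_K) s : \sum_b Pf b s = 1.
Proof. by rewrite /Pf -mulr_suml divff // gt_eqF // (Sx_gt0 a0). Qed.

Lemma dG_le (a0 : 'I_K) eta t : 0 <= eta -> \sum_b v 0 b ^+2 <= eta^+2 ->
  dGf t <= 6 * eta * Gf t.
Proof.
move=> e0 ve.
exact: (@key R K (fun b => Pf b t) (fun b => v 0 b) (fun b => r 0 b) eta
   (fun b => Pf_ge0 b t) (Pf_sum1 a0 t) e0 ve (gs t) (wbar t) (Dgv t)).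
Qed.

Lemma Gf_mono (a0 : 'I_K) eta z : 0 <= eta -> \sum_b v 0 b ^+2 <= eta^+2 ->
  0 <= z -> Gf z <= Gf 0 * expR (6 * eta * z).
Proof.
move=> e0 ve z0.
set d := - (6 * eta).
set F := Gf * (fun s => expR (0 + s * d)).
have dF (x : R) : is_derive x 1 F (Gf x *: (expR (0 + x * d) * d) + expR (0 + x * d) *: dGf x).
  exact: is_deriveM (dG x) (dexp 0 d x).
have [c _ Hc] := MVT_segment z0 (fun x _ => dF x)
  (derivable_within_continuous (fun x _ => @ex_derive _ _ _ _ _ _ _ (dF x))).
have Fle : F z <= F 0.
  have : (Gf c *: (expR (0 + c * d) * d) + expR (0 + c * d) *: dGf c) * (z - 0) <= 0.
    apply: mulr_le0_ge0; last by rewrite subr0.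
    rewrite /GRing.scale /= /d.
    have := (@dG_le a0 eta c e0 ve); have := expR_gt0 (0 + c * - (6 * eta)).
    move=> ep; generalize (expR (0 + c * - (6 * eta))) ep => E Ep h; nra.
  rewrite -Hc; lra.
have FE s : F s = Gf s * expR (s * d).
  by rewrite /F (_ : (Gf * _) s = Gf s * expR (0 + s * d)) // add0r.
move: Fle; rewrite !FE mul0r expR0 mulr1 => Fle.
have -> : Gf z = Gf z * expR (z * d) * expR (6 * eta * z).
  rewrite -mulrA -expRD /d (_ : z * - (6 * eta) + 6 * eta * z = 0) ?expR0 ?mulr1 //; ring.
by apply: ler_wpM2r => //; exact: expR_ge0.
Qed.

End D.
Arguments Ex {R K}. Arguments Sx {R K}. Arguments Pf {R K}. Arguments wbar {R K}.
Arguments gs {R K}. Arguments cc {R K}. Arguments hh {R K}. Arguments Gf {R K}.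
Arguments Dgv {R K}. Arguments dGf {R K}.
Arguments dg {R K}. Arguments softmax_line {R K}. Arguments Gf_mono {R K}.
Arguments Pf_sum1 {R K}. Arguments gval_line {R K}.


Lemma D_line (R : realType) (K : nat) (f : 'rV[R]_K -> R) x v :
  'D_v f x = 'D_1 (fun t : R => f (x + t *: v)) 0.
Proof.
rewrite /derive.
have -> : (fun h : R => h^-1 *: (f (x + (h *: 1 + 0) *: v) - f (x + 0 *: v))) =
   (fun h : R => h^-1 *: (f (h *: v + x) - f x)).
  apply/funext => h /=.
  have e : h *: (1:R) + 0 = h by rewrite addr0 /GRing.scale /= mulr1.
  by rewrite e scale0r addr0 [x + _]addrC.
by [].
Qed.

Lemma sum_delta (R : realType) (K : nat) (F : 'I_K -> R) a :
  \sum_b F b * (delta_mx 0 a : 'rV[R]_K) 0 b = F a.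
Proof.
rewrite (bigD1 a) //= mxE !eqxx mulr1 big1 ?addr0 // => b /negbTE nb.
by rewrite mxE nb andbF mulr0.
Qed.

Lemma grad_line (R : realType) (K : nat) (r th v : 'rV[R]_K) s a :
  grad (gval r) (th + s *: v) 0 a = hh th v r a s.
Proof.
rewrite /grad mxE D_line.
case: (dg (th + s *: v) (delta_mx 0 a) r 0) => _ ->.
have Pq b : Pf (th + s *: v) (delta_mx 0 a) b 0 = Pf th v b s.
  by rewrite /Pf -softmax_line scale0r addr0 softmax_line.
have W : wbar (th + s *: v) (delta_mx 0 a) 0 = Pf th v a s.
  by rewrite /wbar; under eq_bigr => b _ do rewrite Pq; exact: sum_delta.
rewrite W.
under eq_bigr => b _ do rewrite Pq.
rewrite /hh /cc /gs.
have -> : \sum_b Pf th v b s * ((delta_mx 0 a : 'rV[R]_K) 0 b - Pf th v a s) * r 0 b =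
  \sum_b (Pf th v b s * r 0 b) * (delta_mx 0 a : 'rV[R]_K) 0 b
   - Pf th v a s * \sum_b Pf th v b s * r 0 b.
  by rewrite mulr_sumr -sumrB; apply: eq_bigr => b _; ring.
by rewrite sum_delta; ring.
Qed.


Theorem lemma3 (R : realType) (K : nat) (hK : (1 <= K)%N)
  (r : 'rV[R]_K) (hr : forall a, 0 <= r 0 a <= 1)
  (th : 'rV[R]_K) (hg : grad (gval r) th != 0)
  (eta : R) (heta : 0 < eta < 1 / 3)
  (zeta : R) (hzeta : 0 <= zeta <= 1) :
  let th' := th + (eta / norm2 (grad (gval r) th)) *: grad (gval r) th in
  norm2 (grad (gval r) (th + zeta *: (th' - th)))
    <= (1 - 3 * eta)^-1 * norm2 (grad (gval r) th).
Proof.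
cbv zeta.
case/andP: heta => e0 e3; case/andP: hzeta => z0 z1.
set h0 := grad (gval r) th.
set n := norm2 h0.
have a0 : 'I_K := Ordinal hK.
set v := (eta / n) *: h0.
have thz : th + zeta *: (th + v - th) = th + zeta *: v.
  by rewrite addrAC subrr add0r.
have normE s : norm2 (grad (gval r) (th + s *: v)) = Num.sqrt (Gf th v r s).
  rewrite /norm2 /Gf; congr Num.sqrt; apply: eq_bigr => a _; by rewrite grad_line.
have G0 s : 0 <= Gf th v r s by apply: sumr_ge0 => a _; exact: sqr_ge0.
set S0 := \sum_a h0 0 a ^+ 2.
have S0ge : 0 <= S0 by apply: sumr_ge0 => a _; exact: sqr_ge0.
have S0gt : 0 < S0.
  rewrite lt_neqAle S0ge andbT; apply/negP => /eqP S00.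
  have all0 := psumr_eq0P (fun a _ => sqr_ge0 (h0 0 a)) (esym S00).
  move/negP: hg; apply; apply/eqP/rowP => j; rewrite [RHS]mxE.
  by have /eqP := all0 j isT; rewrite sqrf_eq0 => /eqP.
have ngt : 0 < n by rewrite /n /norm2 sqrtr_gt0.
have n2 : n ^+ 2 = S0 by rewrite /n /norm2 sqr_sqrtr.
have vsum : \sum_b v 0 b ^+ 2 <= eta ^+ 2.
  have -> : \sum_b v 0 b ^+ 2 = (eta / n) ^+ 2 * S0.
    by rewrite /S0 mulr_sumr; apply: eq_bigr => b _; rewrite mxE exprMn.
  rewrite -n2 exprMn exprVn -mulrA mulVf ?mulr1 //.
  by rewrite expf_neq0 // gt_eqF.
have Gm := Gf_mono th v r a0 eta zeta (ltW e0) vsum z0.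
have Gz0 : Gf th v r 0 = n ^+ 2.
  have := normE 0; rewrite scale0r addr0 -/h0 -/n => ->.
  by rewrite sqr_sqrtr.
rewrite thz normE.
have a_gt : 0 < 1 - 3 * eta by lra.
set x := expR (3 * eta).
have x_gt : 0 < x := expR_gt0 _.
have xle : x <= (1 - 3 * eta)^-1.
  have h1 : 1 - 3 * eta <= x^-1.
    by rewrite /x -expRN; have := expR_ge1Dx (- (3 * eta)).
  rewrite -[x]invrK ler_pV2 // ?inE ?unitfE ?invr_eq0 ?invr_gt0 ?gt_eqF ?x_gt ?a_gt //.
have Ele : expR (6 * eta * zeta) <= x * x.
  rewrite /x -expRD ler_expR; nra.
set m := (1 - 3 * eta)^-1 * n.
have m0 : 0 <= m by rewrite /m mulr_ge0 // ?invr_ge0 ltW.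
rewrite -(ger0_norm m0) -sqrtr_sqr ler_sqrt ?sqr_ge0 //.
apply: (le_trans Gm); rewrite Gz0 /m exprMn [X in _ <= X]mulrC.
apply: ler_wpM2l; first exact: sqr_ge0.
apply: (le_trans Ele); rewrite expr2.
by apply: ler_pM => //; apply: ltW.
Qed.
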